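(* Let $\mathcal{L}$ be a set, $\mathcal{R}\subseteq\mathcal{P}(\mathcal{L})\times\mathcal{L}$, and let $\mathcal{S}=\langle\mathcal{L},\vdash\rangle$ be the Hilbert-type logical structure induced by $\mathcal{R}$. Let $\Pi$ be a collection of relations $\sigma\subseteq\mathcal{P}(\mathcal{L})\times\mathcal{L}$, and let $\mathcal{S}^\Pi=\langle\mathcal{L},\vdash^\Pi\rangle$ be the $\Pi$-restricted companion of $\mathcal{S}$. Define $\varrho\subseteq\mathcal{P}(\mathcal{L})\times\mathcal{L}$ by $(\Delta,\alpha)\in\varrho$ iff $\Delta\vdash^\Pi\alpha$. Then $\vdash^\Pi\,=\,\vdash^\varrho$, where $\vdash^\varrho$ is the $\varrho$-companion of $\mathcal{S}$.
   Context: For $\mathcal{R}\subseteq\mathcal{P}(\mathcal{L})\times\mathcal{L}$, the Hilbert-type logical structure induced by $\mathcal{R}$ is $\langle\mathcal{L},\vdash\rangle$ where $\Gamma\vdash\alpha$ iff there is a finite sequence $(\beta_0,\ldots,\beta_n)$ of elements of $\mathcal{L}$ with $\beta_n=\alpha$ such that for each $0\le i\le n$, either $\beta_i\in\Gamma$ or there is $\Gamma'\subseteq\{\beta_0,\ldots,\beta_{i-1}\}$ with $(\Gamma',\beta_i)\in\mathcal{R}$. The $\Pi$-restricted companion of the structure induced by $\mathcal{R}$ is the Hilbert-type logical structure induced by $\mathcal{R}^\Pi=\{(\Gamma,\alpha)\in\mathcal{R}\mid (\Gamma,\alpha)\in\sigma\text{ for some }\sigma\in\Pi\}$. For a logical structure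 $\langle\mathcal{L},\vdash\rangle$ and $\varrho\subseteq\mathcal{P}(\mathcal{L})\times\mathcal{L}$, the $\varrho$-companion is given by: $\Gamma\vdash^\varrho\alpha$ iff there is $\Delta\subseteq\Gamma$ with $(\Delta,\alpha)\in\varrho$ and $\Delta\vdash\alpha$. *)

(* Defs.v *)
Definition rule_rel (L : Type) := (L -> Prop) -> L -> Prop.

Definition hilbert {L : Type} (R : rule_rel L) (Gamma : L -> Prop) (alpha : L) : Prop :=
  exists (n : nat) (beta : nat -> L),
    beta n = alpha /\
    forall i, i <= n ->
      Gamma (beta i) \/
      exists Gamma' : L -> Prop,
        (forall x, Gamma' x -> exists j, j < i /\ x = beta j) /\ R Gamma' (beta i).

Definition restrict_rel {L : Type} (R : rule_rel L) (Pi : rule_rel L -> Prop) : rule_rel L :=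
  fun Gamma alpha => R Gamma alpha /\ exists sigma, Pi sigma /\ sigma Gamma alpha.

Definition restricted_companion {L : Type} (R : rule_rel L) (Pi : rule_rel L -> Prop)
  : (L -> Prop) -> L -> Prop :=
  hilbert (restrict_rel R Pi).

Definition rho_companion {L : Type} (vdash : (L -> Prop) -> L -> Prop) (rho : rule_rel L)
  : (L -> Prop) -> L -> Prop :=
  fun Gamma alpha =>
    exists Delta : L -> Prop, (forall x, Delta x -> Gamma x) /\ rho Delta alpha /\ vdash Delta alpha.

(* Main.v *)
Require Import Defs.

Lemma hilbert_mono {L : Type} (R R' : rule_rel L) (G G' : L -> Prop) a :
  (forall D x, R D x -> R' D x) -> (forall x, G x -> G' x) ->
  hilbert R G a -> hilbert R' G' a.
Proof.
  intros HR HG [n [b [Hn Hb]]]. exists n, b. split; [exact Hn|].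
  intros i Hi. destruct (Hb i Hi) as [H|[D [H1 H2]]].
  - left; auto.
  - right; exists D; split; auto.
Qed.

Theorem mainTheorem13 (L : Type) (R : rule_rel L) (Pi : rule_rel L -> Prop) :
  let vdashPi := restricted_companion R Pi in
  let rho : rule_rel L := fun Delta alpha => vdashPi Delta alpha in
  forall (Gamma : L -> Prop) (alpha : L),
    vdashPi Gamma alpha <-> rho_companion (hilbert R) rho Gamma alpha.
Proof.
  intros vdashPi rho Gamma alpha. unfold vdashPi, rho, rho_companion, restricted_companion.
  split.
  - intros H. exists Gamma. split; [auto|]. split; [exact H|].
    eapply hilbert_mono; [| |exact H]; [intros D x [Hx _]; exact Hx | auto].
  - intros [D [HD [H _]]]. eapply hilbert_mono; [| |exact H]; auto.
Qed.
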